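(* Let $E$ be a (Hausdorff, real) topological vector space and $A\subseteq E\setminus\{0\}$. The following are equivalent: (i) the linear Kalton map $lK_A:lS_A\to E$ is continuous; (ii) the Kalton map $K_A:S_A\to E$ is continuous; (iii) the set $A$ is absolutely Cauchy summable.
   Context: For $a\in E$, $\langle a\rangle$ denotes the additive cyclic subgroup generated by $a$ and $\mathbb{R}a=\{ra:r\in\mathbb{R}\}$, both with the subspace topology. $S_A=\bigoplus_{a\in A}\langle a\rangle$ and $lS_A=\bigoplus_{a\in A}\mathbb{R}a$ denote the finitely supported elements of $\prod_{a\in A}\langle a\rangle$, resp. $\prod_{a\in A}\mathbb{R}a$, with the subspace topology of the Tychonoff product topology. The Kalton map $K_A:S_A\to E$ is the unique group homomorphism extending each inclusion $\langle a\rangle\to E$, and the linear Kalton map $lK_A:lS_A\to E$ is the unique linear map extending each inclusion $\mathbb{R}a\to E$. $A$ is absolutely Cauchy summable if for every neighbourhood $U$ of $0$ there is a finite $F\subseteq A$ such that the additive subgroup generated by $A\setminus F$ is contained in $U$. *)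

(* Defs.v *)
From HB Require Import structures.
From mathcomp Require Import all_boot all_order all_algebra.
From mathcomp Require Import all_classical all_reals all_analysis.
Set Implicit Arguments. Unset Strict Implicit. Unset Printing Implicit Defensive.
Import Order.TTheory GRing.Theory Num.Theory.
Local Open Scope classical_set_scope.
Local Open Scope ring_scope.

(* Real topological vector spaces are modelled by [topologicalLmodType R]
   (continuous addition and jointly continuous scalar multiplication) over
   a [realType] R.  Elements of prod_{a in A} E are functions
   [set_type A -> E] with the product (pointwise) topology [{ptws _ -> _}]. *)

Section Kalton.
Context {R : realType} {E : topologicalLmodType R} (A : set E).

Definition prodA := {ptws set_type A -> E}.

Definition finsupp (f : prodA) : Prop := finite_set [set i | f i != 0].

Definition S_A : set prodA :=
  [set f | finsupp f /\ forall i : set_type A, exists z : int, f i = (val i) *~ z].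

Definition lS_A : set prodA :=
  [set f | finsupp f /\ forall i : set_type A, exists r : R, f i = r *: (val i)].

(* the (linear) Kalton map: sum of the (finitely many nonzero) coordinates;
   K_A is its restriction to S_A, lK_A its restriction to lS_A *)
Definition kalton (f : prodA) : E := \sum_(i \in [set: set_type A]) f i.

End Kalton.
Arguments finsupp {R E} A f.
Arguments S_A {R E} A.
Arguments lS_A {R E} A.
Arguments kalton {R E} A f.


Section Summable.
Context {R : realType} {E : topologicalLmodType R}.

Definition is_add_subgroup (G : set E) : Prop :=
  G 0 /\ forall x y, G x -> G y -> G (x - y).

Definition add_subgroup_gen (B : set E) : set E :=
  \bigcap_(G in [set G | is_add_subgroup G /\ B `<=` G]) G.

Definition abs_cauchy_summable (A : set E) : Prop :=
  forall U : set E, nbhs (0 : E) U ->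
    exists F : set E, [/\ finite_set F, F `<=` A & add_subgroup_gen (A `\` F) `<=` U].

End Summable.

(* Main.v *)
Require Import Defs.
From HB Require Import structures.
From mathcomp Require Import all_boot all_order all_algebra.
From mathcomp Require Import all_classical all_reals all_analysis.
Local Open Scope classical_set_scope.
Local Open Scope ring_scope.
Import Order.TTheory GRing.Theory Num.Theory.
Section H.
Context {R : realType} {E : topologicalLmodType R}.

Lemma nbhs0_add (U : set E) : nbhs 0 U ->
  exists2 V, nbhs 0 V & forall x y, V x -> V y -> U (x + y).
Proof.
move=> U0.
have := @add_continuous E (0, 0); rewrite /continuous_at /= addr0 => /(_ U U0).
case=> -[P Q] /= [P0 Q0] PQ.
exists (P `&` Q); first exact: filterI.
by move=> x y [Px _] [_ Qy]; apply: (PQ (x, y)).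
Qed.

Lemma nbhs_shift (c : E) (U : set E) : nbhs c U -> nbhs 0 [set z | U (c + z)].
Proof.
move=> Uc.
have := @add_continuous E (c, 0); rewrite /continuous_at /= addr0 => /(_ U Uc).
case=> -[P Q] /= [P0 Q0] PQ.
apply: filterS Q0 => z Qz; apply: (PQ (c, z)); split => //=.
exact: nbhs_singleton.
Qed.

Lemma nbhs_unshift (c : E) (U : set E) : nbhs 0 U -> nbhs c [set y | U (y - c)].
Proof.
move=> U0.
have := @sub_continuous E (c, c); rewrite /continuous_at /= subrr => /(_ U U0).
case=> -[P Q] /= [P0 Q0] PQ.
apply: filterS P0 => z Pz; apply: (PQ (z, c)); split => //=.
exact: nbhs_singleton.
Qed.

Lemma scale_small (a : E) (V : set E) : nbhs 0 V ->
  exists2 d : R, 0 < d & forall t : R, `|t| < d -> V (t *: a).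
Proof.
move=> V0.
have := @scale_continuous R E (0, a); rewrite /continuous_at /= scale0r => /(_ V V0).
case=> -[P Q] /= [P0 Q0] PQ.
have [d d0 hd] := (nbhs_ballP _ _).1 P0.
exists d => // t td; apply: (PQ (t, a)); split => //=; last exact: nbhs_singleton.
apply: hd; rewrite /ball /= sub0r normrN; exact: td.
Qed.

Lemma scale_small0 (V : set E) : nbhs 0 V ->
  exists d : R, exists W, [/\ 0 < d, nbhs 0 W &
    forall t w, `|t| < d -> W w -> V (t *: w)].
Proof.
move=> V0.
have := @scale_continuous R E (0, 0); rewrite /continuous_at /= scale0r => /(_ V V0).
case=> -[P Q] /= [P0 Q0] PQ.
have [d d0 hd] := (nbhs_ballP _ _).1 P0.
exists d, Q; split => // t w td Qw; apply: (PQ (t, w)); split => //=.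
apply: hd; rewrite /ball /= sub0r normrN; exact: td.
Qed.

Lemma small_sum {X : eqType} (s : seq X) (b : X -> E) (V : set E) : nbhs 0 V ->
  exists2 d : R, 0 < d & forall e : X -> R,
    (forall x, x \in s -> `|e x| < d) -> V (\sum_(x <- s) e x *: b x).
Proof.
move=> V0; elim: s V V0 => [|x s IH] V V0.
  by exists 1 => // e _; rewrite big_nil; exact: nbhs_singleton.
have [W W0 WW] := nbhs0_add _ V0.
have [d1 d10 h1] := scale_small (b x) _ W0.
have [d2 d20 h2] := IH W W0.
exists (Order.min d1 d2); first by rewrite lt_min d10 d20.
move=> e he; rewrite big_cons; apply: WW.
  by apply: h1; have := he x (mem_head _ _); rewrite lt_min => /andP[].
apply: h2 => y ys; have := he y; rewrite in_cons ys orbT => /(_ isT).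
by rewrite lt_min => /andP[].
Qed.

Lemma subgroup0 (G : set E) : is_add_subgroup G -> G 0.
Proof. by case. Qed.
Lemma subgroupN (G : set E) x : is_add_subgroup G -> G x -> G (- x).
Proof. by move=> [G0 GB] Gx; have := GB 0 x G0 Gx; rewrite sub0r. Qed.
Lemma subgroupD (G : set E) x y : is_add_subgroup G -> G x -> G y -> G (x + y).
Proof.
move=> hG Gx Gy; rewrite -[y]opprK; have [_ GB] := hG; apply: GB => //.
exact: subgroupN.
Qed.
Lemma subgroupMz (G : set E) x z : is_add_subgroup G -> G x -> G (x *~ z).
Proof.
move=> hG Gx; case: z => n.
  elim: n => [|n IH]; first by rewrite mulr0z; apply: subgroup0.
  by rewrite -addn1 PoszD mulrzDr mulr1z; apply: subgroupD.
rewrite NegzE mulrNz; apply: subgroupN => //.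
elim: n => [|n IH]; first by rewrite mulr1z.
by rewrite -addn1 PoszD mulrzDr mulr1z; apply: subgroupD.
Qed.

Lemma gen_sum (B : set E) {X : eqType} (s : seq X) (b : X -> E) (z : X -> int) :
  (forall x, x \in s -> B (b x)) -> add_subgroup_gen B (\sum_(x <- s) b x *~ z x).
Proof.
move=> Bb G [hG BG]; elim: s Bb => [|x s IH] Bb.
  by rewrite big_nil; apply: subgroup0.
rewrite big_cons; apply: subgroupD => //.
  by apply: subgroupMz => //; apply: BG; apply: Bb; rewrite mem_head.
by apply: IH => y ys; apply: Bb; rewrite in_cons ys orbT.
Qed.

Lemma span_small (U : set E) : nbhs 0 U -> exists2 W, nbhs 0 W &
  forall B : set E, add_subgroup_gen B `<=` W ->
  forall (X : eqType) (s : seq X) (r : X -> R) (b : X -> E),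
    (forall x, x \in s -> B (b x)) -> U (\sum_(x <- s) r x *: b x).
Proof.
move=> U0; have [V V0 VV] := nbhs0_add _ U0.
have [d [W [d0 W0 hW]]] := scale_small0 _ V0.
exists W => // B BW X s r b Bb.
have [eps eps0 heps] := small_sum s b _ V0.
set m := Order.min d eps.
have m0 : 0 < m by rewrite lt_min d0 eps0.
set N : R := (Num.trunc m^-1).+1%:R.
have N0 : 0 < N by rewrite ltr0n.
have Nm : N^-1 < m.
  by rewrite invf_plt ?posrE //; exact: truncnS_gt.
set n := fun x => Num.floor (N * r x).
have -> : \sum_(x <- s) r x *: b x =
   N^-1 *: (\sum_(x <- s) b x *~ n x) + \sum_(x <- s) (r x - (n x)%:~R / N) *: b x.
  rewrite scaler_sumr -big_split /=; apply: eq_bigr => x _.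
  rewrite -scaler_int scalerA -scalerDl; congr (_ *: _).
  by rewrite mulrC addrC subrK.
apply: VV.
  apply: hW; last by apply: BW; exact: gen_sum.
  by rewrite gtr0_norm ?invr_gt0 //; apply: lt_le_trans Nm _; rewrite ge_min lexx.
apply: heps => x _.
have := floor_itv (N * r x); rewrite -/(n x) intrD => /andP[h1 h2].
have -> : r x - (n x)%:~R / N = (N * r x - (n x)%:~R) / N.
  by rewrite mulrBl [N * r x]mulrC -mulrA mulfV ?gt_eqF // mulr1.
have hge : 0 <= N * r x - (n x)%:~R by rewrite subr_ge0.
rewrite ger0_norm; last by rewrite divr_ge0 // ltW.
apply: (@lt_le_trans _ _ N^-1); last first.
  by apply: le_trans (ltW Nm) _; rewrite ge_min lexx orbT.
rewrite ltr_pdivrMr // mulVf ?gt_eqF //.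
by rewrite ltrBlDr addrC.
Qed.
End H.

Section K.
Context {R : realType} {E : topologicalLmodType R} (A : set E).
Local Notation I := (set_type A).

Lemma kalton_seq (h : prodA A) (r : seq I) : uniq r ->
  (forall i, h i != 0 -> i \in r) -> kalton A h = \sum_(i <- r) h i.
Proof.
move=> ur hr; rewrite (fsbig_seq _ _ ur) /kalton.
apply/esym/fsbig_widen => // i [_ /= ir].
by have [//|/hr ?] := eqVneq (h i) 0; exfalso; apply: ir.
Qed.

Lemma kalton_sub (g h : prodA A) : finsupp A g -> finsupp A h ->
  kalton A ((fun i => g i - h i) : prodA A) = kalton A g - kalton A h.
Proof.
move=> fg fh; set J := [set i | g i != 0] `|` [set i | h i != 0].
have fJ : finite_set J by rewrite finite_setU.
set r := finmap.enum_fset (fset_set J).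
have inJ (i : I) : J i -> i \in r.
  by move=> Ji; have := in_fset_set fJ i; rewrite mem_set // => <-.
have ur : uniq r by exact: finmap.fset_uniq.
have -> : kalton A g = \sum_(i <- r) g i.
  by apply: kalton_seq => // i hi; apply: inJ; left.
have -> : kalton A h = \sum_(i <- r) h i.
  by apply: kalton_seq => // i hi; apply: inJ; right.
rewrite -sumrB; apply: kalton_seq => // i /= hi; apply: inJ.
have [g0|] := eqVneq (g i) 0; last by left.
by right; apply: contra_neq hi => /= h0; rewrite g0 h0 subrr.
Qed.
End K.
Section K2.
Context {R : realType} {E : topologicalLmodType R} (A : set E).
Local Notation I := (set_type A).

Definition vanish (J : set I) : set (prodA A) := [set g | forall i, J i -> g i = 0].
Definition Fl := filter_from [set J : set I | finite_set J] vanish.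

Lemma Fl_filter : Filter Fl.
Proof.
apply: filter_from_filter; first by exists set0 => /=; exact: finite_set0.
move=> J1 J2 f1 f2; exists (J1 `|` J2); first by rewrite /= finite_setU.
by move=> g hg; split => i Ji; apply: hg; [left|right].
Qed.

Lemma Fl_cvg : Fl --> ((fun _ => 0) : prodA A).
Proof.
have FF := Fl_filter.
apply/cvg_sup => i.
move=> Q /=; rewrite (@nbhsE (initial_topology (fun f : prodA A => f i))) => -[B [oB Bz] BQ].
case: oB => C oC CB; rewrite -CB /= in Bz.
exists [set i]; first exact: finite_set1.
move=> g gi; apply: BQ; rewrite -CB /= (gi i erefl) //.
Qed.

Lemma zero_S : S_A A ((fun _ => 0) : prodA A).
Proof.
split; last by move=> i; exists 0; rewrite mulr0z.
by apply: (sub_finite_set _ (finite_set0 I)) => i /=; rewrite eqxx.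
Qed.

Lemma kalton0 : kalton A ((fun _ => 0) : prodA A) = 0.
Proof. by rewrite /kalton fsbig1. Qed.

Lemma ii_iii : {within S_A A, continuous (kalton A)} -> abs_cauchy_summable A.
Proof.
move=> hc U U0.
have := (subspace_continuousP _ _).1 hc _ zero_S => /(_ U); rewrite /from_subspace kalton0 => /(_ U0).
move=> /= hU.
have : Fl ([set g | S_A A g -> U (kalton A g)]) by apply: Fl_cvg.
case=> J /= Jfin JW.
exists (val @` J); split; first exact: finite_image.
  by move=> _ [i _ <-]; exact: set_valP.
move=> x hx.
have [g [Sg vg ->]] : [set y | exists g, [/\ S_A A g, vanish J g & y = kalton A g]] x.
  apply: hx; split; last first.
    move=> a [Aa nFa]; set i0 : I := exist _ a (mem_set Aa).
    exists ((fun i => if i == i0 then val i else 0) : prodA A); split.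
    - split.
        apply: (sub_finite_set _ (finite_set1 i0)) => i /=.
        by have [->|ne] := eqVneq i i0; rewrite ?eqxx.
      move=> i; exists (i == i0)%:Z.
      by have [->|ne] := eqVneq i i0; rewrite ?mulr1z ?mulr0z.
    - move=> i Ji; have [ei|//] := eqVneq i i0; exfalso; apply: nFa; exists i => //.
      by rewrite ei.
    - rewrite (kalton_seq A _ [:: i0]) //= ?big_seq1 ?eqxx //.
      by move=> i; have [->|ne] := eqVneq i i0; rewrite ?mem_head ?eqxx.
  split.
    by exists ((fun _ => 0) : prodA A); split; [exact: zero_S|by []|rewrite kalton0].
  move=> _ _ [g [Sg vg ->]] [h [Sh vh ->]].
  exists ((fun i => g i - h i) : prodA A); split; last by rewrite kalton_sub //; [case: Sg|case: Sh].
    split.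
      apply: (sub_finite_set (B := [set i | g i != 0] `|` [set i | h i != 0])).
        move=> i /= hi; have [g0|] := eqVneq (g i) 0; last by left.
        by right; apply: contra_neq hi => /= h0; rewrite g0 h0 subrr.
      by rewrite finite_setU; split; [case: Sg|case: Sh].
    move=> i; have [m ->] := Sg.2 i; have [n ->] := Sh.2 i.
    by exists (m - n); rewrite mulrzBr.
  by move=> i Ji; rewrite vg // vh // subrr.
by apply: JW.
Qed.

Lemma memE (X : set I) (fX : finite_set X) i :
  (i \in finmap.enum_fset (fset_set X)) = (i \in X).
Proof. exact: in_fset_set fX i. Qed.

Lemma near_sum (f : prodA A) (s : seq I) (V : set E) : nbhs 0 V ->
  nbhs f [set g : prodA A | V (\sum_(i <- s) (g i - f i))].
Proof.
move=> V0; elim: s V V0 => [|i s IH] V V0.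
  by apply: filterS filterT => g _ /=; rewrite big_nil; exact: nbhs_singleton.
have [W W0 WW] := nbhs0_add _ V0.
have h1 : nbhs f [set g : prodA A | W (g i - f i)].
  have hW := nbhs_unshift (f i) _ W0.
  exact: (@proj_continuous I (fun _ => E) i f _ hW).
apply: filterS (filterI h1 (IH W W0)) => g [h1g h2g] /=; rewrite big_cons; exact: WW.
Qed.

Lemma iii_i : abs_cauchy_summable A -> {within lS_A A, continuous (kalton A)}.
Proof.
move=> hacs; apply/subspace_continuousP => f lf U /= hU.
rewrite /from_subspace in hU *.
have Z0 := nbhs_shift (kalton A f) U hU.
have [V V0 VV] := nbhs0_add _ Z0.
have [W W0 hW] := span_small _ V0.
have [F [Ffin FA FW]] := hacs W W0.
set J := [set i : I | F (val i)] `|` [set i | f i != 0].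
have fJ : finite_set J.
  rewrite finite_setU; split; last by case: lf.
  by apply: finite_preimage => // ? ? ? ? ; exact: val_inj.
set s := finmap.enum_fset (fset_set J).
have us : uniq s by exact: finmap.fset_uniq.
have sJ i : (i \in s) = (i \in J) by rewrite memE.
apply: filterS (near_sum f s _ V0) => g hg lg.
have fg : finite_set ([set i | g i != 0] `\` J).
  by apply: (sub_finite_set _ lg.1) => i [].
set s2 := finmap.enum_fset (fset_set ([set i | g i != 0] `\` J)).
have us2 : uniq s2 by exact: finmap.fset_uniq.
have s2J i : (i \in s2) = (i \in [set i | g i != 0] `\` J) by rewrite memE.
have u12 : uniq (s ++ s2).
  rewrite cat_uniq us us2 andbT /=; apply/hasPn => i.
  rewrite s2J sJ !inE => -[_ nJ]; apply/negP; rewrite inE; exact: nJ.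
have cov (h : prodA A) : (forall i, h i != 0 -> J i \/ g i != 0) ->
    kalton A h = \sum_(i <- s ++ s2) h i.
  move=> hh; apply: kalton_seq => // i /hh hi; rewrite mem_cat sJ s2J.
  apply/orP; case: (pselect (J i)) => Ji; [left; exact: mem_set|right].
  by apply: mem_set; split => //; case: hi.
suff : U (kalton A g) by [].
have -> : kalton A g = kalton A f + (kalton A g - kalton A f) by rewrite addrC subrK.
have -> : kalton A g - kalton A f =
    \sum_(i <- s) (g i - f i) + \sum_(i <- s2) (g i - f i).
  rewrite (cov g) ?(cov f) -?sumrB ?big_cat //.
  - by move=> i hi; left; right.
  - by move=> i hi; right.
apply: (VV _ _ hg).
have [rg hrg] := choice lg.2.
rewrite big_seq (eq_bigr (fun i => rg i *: val i)); last first.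
  move=> i; rewrite s2J inE => -[_ nJ].
  have -> : f i = 0 by apply/eqP; apply: contrapT => fi; apply: nJ; right; exact/negP.
  by rewrite subr0 hrg.
rewrite -big_seq; apply: hW FW _ _ _ _ _ => i; rewrite s2J inE => -[_ nJ].
by split; [exact: set_valP|move=> Fi; apply: nJ; left].
Qed.
End K2.

Lemma S_sub_lS {R : realType} {E : topologicalLmodType R} (A : set E) :
  S_A A `<=` lS_A A.
Proof.
move=> g [fg hg]; split => // i; have [z ->] := hg i.
by exists z%:~R; rewrite scaler_int.
Qed.

Theorem proposition10p1 (R : realType) (E : topologicalLmodType R)
  (hE : hausdorff_space E) (A : set E) (hA0 : ~ A 0) :
  ({within (lS_A A), continuous (kalton A)} <->
   {within (S_A A), continuous (kalton A)}) /\
  ({within (S_A A), continuous (kalton A)} <-> abs_cauchy_summable A).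
Proof.
split; split.
- by apply: continuous_subspaceW; exact: S_sub_lS.
- by move=> h; apply: iii_i; apply: ii_iii.
- exact: ii_iii.
- move=> h; apply: (continuous_subspaceW (S_sub_lS A)); exact: iii_i.
Qed.
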